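(* Consider a tabular discounted MDP (finite $\mathcal{S},\mathcal{A}$, discount $\gamma\in[0,1)$, rewards in $[0,1]$), a mirror map $h$ of Legendre type with $\Delta(\mathcal{A})\subseteq\operatorname{dom}h$, and the inexact policy mirror descent iterates $$\pi^{k+1}_s=\operatorname{argmin}_{p\in\Delta(\mathcal{A})}\Big\{-\eta_k\langle\widehat{Q}^k_s,p\rangle+D_h(p,\pi^k_s)\Big\}\quad\text{for all }s,$$ with $\pi^0\in\operatorname{rint}\Pi$, $\eta_k>0$, and arbitrary estimates $\widehat{Q}^k\in\mathbb{R}^{\mathcal{S}\times\mathcal{A}}$. For any $k\ge0$ and $\tau>0$, if $\|\widehat{Q}^k_s-Q^k_s\|_\infty\leq\tau$ for all $s\in\mathcal{S}$, then $$Q^{k+1}(s,a)\geq Q^k(s,a)-\frac{2\tau\gamma}{1-\gamma}\quad\text{for all }(s,a)\in\mathcal{S}\times\mathcal{A}.$$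
   Context: A policy is $\pi:\mathcal{S}\to\Delta(\mathcal{A})$, $\pi_s=\pi(\cdot|s)$; $\Pi=\Delta(\mathcal{A})^{|\mathcal{S}|}$, $\operatorname{rint}\Pi$ its relative interior. $Q^\pi(s,a)=\mathbb{E}[\sum_{t\ge0}\gamma^tr(s_t,a_t)\mid\pi,s_0=s,a_0=a]$; $Q^k=Q^{\pi^k}$ (true action values of the iterates), $Q^k_s=(Q^k(s,a))_a$, and $\widehat{Q}^k_s=(\widehat{Q}^k(s,a))_a$. Legendre type: strictly convex and essentially smooth on the relative interior of the domain; $D_h(p,q)=h(p)-h(q)-\langle\nabla h(q),p-q\rangle$. *)

(* Defs.v *)
From HB Require Import structures.
From mathcomp Require Import all_boot all_order all_algebra.
From mathcomp Require Import all_classical all_reals.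
From mathcomp Require Import all_analysis.
Import numFieldNormedType.Exports.
Set Implicit Arguments. Unset Strict Implicit. Unset Printing Implicit Defensive.
Import Order.TTheory GRing.Theory Num.Theory.
Local Open Scope ring_scope.
Local Open Scope classical_set_scope.

Section Defs.
Variable R : realType.

Section Vec.
Variable I : finType.

Definition vnorm (x : I -> R) : R := \big[Num.max/0]_(i : I) `|x i|.
Definition dotp (x y : I -> R) : R := \sum_(i : I) x i * y i.

Definition affhull (C : set (I -> R)) : set (I -> R) :=
  [set x | exists (n : nat) (c : 'I_n -> R) (y : 'I_n -> I -> R),
      (forall j, C (y j)) /\ \sum_(j < n) c j = 1 /\
      x = (fun i => \sum_(j < n) c j * y j i)].

Definition affdir (C : set (I -> R)) : set (I -> R) :=
  [set v | exists x y, affhull C x /\ affhull C y /\ v = (fun i => y i - x i)].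

Definition rint (C : set (I -> R)) : set (I -> R) :=
  [set x | C x /\ exists e : R, 0 < e /\
      forall y, affhull C y -> vnorm (fun i => y i - x i) < e -> C y].

Definition vclosure (C : set (I -> R)) : set (I -> R) :=
  [set x | forall e : R, 0 < e -> exists y, C y /\ vnorm (fun i => y i - x i) < e].

Definition simplex : set (I -> R) :=
  [set p | (forall i, 0 <= p i) /\ \sum_(i : I) p i = 1].

Definition edom (h : (I -> R) -> \bar R) : set (I -> R) :=
  [set x | h x \is a fin_num].

Definition proper_convex (h : (I -> R) -> \bar R) : Prop :=
  (forall x, h x != -oo%E) /\ (exists x, edom h x) /\
  forall x y (t : R), edom h x -> edom h y -> 0 <= t <= 1 ->
    edom h (fun i => t * x i + (1 - t) * y i) /\
    fine (h (fun i => t * x i + (1 - t) * y i)) <=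
      t * fine (h x) + (1 - t) * fine (h y).

Definition rel_gradient (h : (I -> R) -> \bar R) (x g : I -> R) : Prop :=
  affdir (edom h) g /\
  forall e : R, 0 < e -> exists d : R, 0 < d /\
    forall v, affdir (edom h) v -> vnorm v < d ->
      `|fine (h (fun i => x i + v i)) - fine (h x) - dotp g v| <= e * vnorm v.

(* h is of Legendre type, with gradient map g on rint dom h:
   proper convex, strictly convex on rint dom h, and essentially smooth there
   (rint dom h nonempty, h differentiable on it with gradient g, and
   |grad h(x_k)| -> +oo along sequences in rint dom h converging to a
   relative-boundary point of dom h). *)
Definition legendre (h : (I -> R) -> \bar R) (g : (I -> R) -> I -> R) : Prop :=
  proper_convex h /\
  (forall x y (t : R), rint (edom h) x -> rint (edom h) y -> x != y ->
     0 < t < 1 ->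
     fine (h (fun i => t * x i + (1 - t) * y i)) <
       t * fine (h x) + (1 - t) * fine (h y)) /\
  (exists x, rint (edom h) x) /\
  (forall x, rint (edom h) x -> rel_gradient h x (g x)) /\
  (forall (u : nat -> I -> R) (x : I -> R),
     (forall k, rint (edom h) (u k)) ->
     vclosure (edom h) x -> ~ rint (edom h) x ->
     (forall e : R, 0 < e -> exists N, forall k, (N <= k)%N ->
        vnorm (fun i => u k i - x i) < e) ->
     forall M : R, exists N, forall k, (N <= k)%N -> M < vnorm (g (u k))).

Definition bregman (h : (I -> R) -> \bar R) (g : (I -> R) -> I -> R)
  (p q : I -> R) : R :=
  fine (h p) - fine (h q) - dotp (g q) (fun i => p i - q i).
End Vec.

Section MDP.
Variables (S A : finType).
(* transition kernel P(s'|s,a) = P s a s', reward r, discount gamma *)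
Variables (P : S -> A -> S -> R) (r : S -> A -> R) (gamma : R).

Definition is_mdp : Prop :=
  (forall s a, simplex (P s a)) /\ (forall s a, 0 <= r s a <= 1) /\
  0 <= gamma < 1.

Definition is_policy (pi : S -> A -> R) : Prop := forall s, simplex (pi s).

Definition Pi_set : set (S * A -> R) :=
  [set x | forall s, simplex (fun a => x (s, a))].
Definition uncurry_pol (pi : S -> A -> R) : S * A -> R := fun sa => pi sa.1 sa.2.

(* law of (s_t, a_t) given s_0 = s, a_0 = a, following pi *)
Fixpoint state_action_law (pi : S -> A -> R) (s : S) (a : A) (t : nat)
  : S -> A -> R :=
  match t with
  | 0 => fun s' a' => ((s' == s) && (a' == a))%:R
  | t'.+1 => fun s' a' =>
      \sum_(s0 : S) \sum_(a0 : A)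
        state_action_law pi s a t' s0 a0 * P s0 a0 s' * pi s' a'
  end.

Definition Qfun (pi : S -> A -> R) (s : S) (a : A) : R :=
  limn (fun n : nat => (\sum_(0 <= t < n)
     gamma ^+ t * \sum_(s' : S) \sum_(a' : A)
        state_action_law pi s a t s' a' * r s' a' : R)).
End MDP.
End Defs.

(* Main.v *)
Require Import Defs.
From HB Require Import structures.
From mathcomp Require Import all_boot all_order all_algebra.
From mathcomp Require Import all_classical all_reals.
From mathcomp Require Import all_analysis.
From mathcomp Require Import ring lra.
Import numFieldNormedType.Exports.
Import Order.TTheory GRing.Theory Num.Theory.
Local Open Scope ring_scope.
Local Open Scope classical_set_scope.

Lemma cvg_sumF (R : realType) (I : finType) (f : I -> nat -> R) (l : I -> R) :
  (forall i, f i n @[n --> \oo] --> l i) ->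
  (\sum_(i : I) f i n) @[n --> \oo] --> \sum_(i : I) l i.
Proof.
move=> H; apply: (@cvg_big R I +%R 0 xpredT _ _ _ _ f l) => //.
exact: add_continuous.
Qed.

Section MDPpart.
Variables (R : realType) (S A : finType) (P : S -> A -> S -> R) (r : S -> A -> R) (gamma : R).
Variable (pi : S -> A -> R).

Lemma sum_ind2 (F : S -> A -> R) s a :
  \sum_(s0 : S) \sum_(a0 : A) ((s0 == s) && (a0 == a))%:R * F s0 a0 = F s a.
Proof.
rewrite (bigD1 s) //= [X in _ + X]big1 ?addr0; last first.
  move=> s0 Hs; rewrite big1 // => a0 _.
  by rewrite (negbTE Hs) mul0r.
rewrite (bigD1 a) //= !eqxx mul1r [X in _ + X]big1 ?addr0 // => a0 Ha.
by rewrite (negbTE Ha) andbF mul0r.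
Qed.

Lemma sum_ind2' (F : S -> A -> R) s a :
  \sum_(s0 : S) \sum_(a0 : A) F s0 a0 * ((s == s0) && (a == a0))%:R = F s a.
Proof.
rewrite -[RHS](sum_ind2 F s a); apply: eq_bigr => s0 _; apply: eq_bigr => a0 _.
by rewrite mulrC (eq_sym s) (eq_sym a).
Qed.

Local Notation law := (state_action_law P pi).

Lemma exch4 (F : S -> A -> S -> A -> R) :
  \sum_(s0 : S) \sum_(a0 : A) \sum_(s1 : S) \sum_(a1 : A) F s0 a0 s1 a1 =
  \sum_(s1 : S) \sum_(a1 : A) \sum_(s0 : S) \sum_(a0 : A) F s0 a0 s1 a1.
Proof.
under eq_bigr => s0 _ do rewrite exchange_big /=.
rewrite exchange_big /=.
apply: eq_bigr => s1 _.
under eq_bigr => s0 _ do rewrite exchange_big /=.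
by rewrite exchange_big.
Qed.

Lemma law_succ s a t s2 a2 : law s a t.+1 s2 a2 =
  \sum_(s0 : S) \sum_(a0 : A) law s a t s0 a0 * P s0 a0 s2 * pi s2 a2.
Proof. by []. Qed.

Lemma law_first t s a s2 a2 :
  law s a t.+1 s2 a2 =
  \sum_(s1 : S) \sum_(a1 : A) P s a s1 * pi s1 a1 * law s1 a1 t s2 a2.
Proof.
elim: t s2 a2 => [|t IH] s2 a2.
  rewrite /=; under eq_bigr do under eq_bigr do rewrite -mulrA.
  by rewrite (sum_ind2 (fun s0 a0 => P s0 a0 s2 * pi s2 a2))
    (sum_ind2' (fun s1 a1 => P s a s1 * pi s1 a1)).
rewrite law_succ.
transitivity (\sum_(s0 : S) \sum_(a0 : A) \sum_(s1 : S) \sum_(a1 : A)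
   P s a s1 * pi s1 a1 * (law s1 a1 t s0 a0 * P s0 a0 s2 * pi s2 a2)).
  apply: eq_bigr => s0 _; apply: eq_bigr => a0 _.
  rewrite IH !mulr_suml; apply: eq_bigr => s1 _; rewrite !mulr_suml.
  by apply: eq_bigr => a1 _; rewrite !mulrA.
transitivity (\sum_(s1 : S) \sum_(a1 : A) \sum_(s0 : S) \sum_(a0 : A)
   P s a s1 * pi s1 a1 * (law s1 a1 t s0 a0 * P s0 a0 s2 * pi s2 a2)); last first.
  apply: eq_bigr => s1 _; apply: eq_bigr => a1 _.
  by rewrite law_succ mulr_sumr; apply: eq_bigr => s0 _; rewrite mulr_sumr.
exact: exch4.
Qed.


Hypothesis Pnn : forall s a s', 0 <= P s a s'.
Hypothesis Psum : forall s a, \sum_(s' : S) P s a s' = 1.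
Hypothesis pinn : forall s a, 0 <= pi s a.
Hypothesis pisum : forall s, \sum_(a : A) pi s a = 1.
Hypothesis rb : forall s a, 0 <= r s a <= 1.
Hypothesis gb : 0 <= gamma < 1.

Definition Ex t s a := \sum_(s' : S) \sum_(a' : A) law s a t s' a' * r s' a'.
Definition Up n s a := \sum_(0 <= t < n) gamma ^+ t * Ex t s a.

Lemma law_ge0 t s a s' a' : 0 <= law s a t s' a'.
Proof.
elim: t s' a' => [|t IH] s' a'; first by rewrite /= ler0n.
rewrite law_succ; apply: sumr_ge0 => s0 _; apply: sumr_ge0 => a0 _.
by rewrite !mulr_ge0.
Qed.

Lemma Ex_ge0 t s a : 0 <= Ex t s a.
Proof.
apply: sumr_ge0 => s0 _; apply: sumr_ge0 => a0 _.
by rewrite mulr_ge0 ?law_ge0 //; case/andP: (rb s0 a0).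
Qed.

Lemma Ex0 s a : Ex 0 s a = r s a.
Proof. by rewrite /Ex /= (sum_ind2 r). Qed.

Lemma Ex_first t s a :
  Ex t.+1 s a = \sum_(s1 : S) \sum_(a1 : A) P s a s1 * pi s1 a1 * Ex t s1 a1.
Proof.
rewrite /Ex.
transitivity (\sum_(s0 : S) \sum_(a0 : A) \sum_(s1 : S) \sum_(a1 : A)
   P s a s1 * pi s1 a1 * (law s1 a1 t s0 a0 * r s0 a0)).
  apply: eq_bigr => s0 _; apply: eq_bigr => a0 _.
  rewrite law_first mulr_suml; apply: eq_bigr => s1 _; rewrite mulr_suml.
  by apply: eq_bigr => a1 _; rewrite mulrA.
rewrite exch4.
apply: eq_bigr => s1 _; apply: eq_bigr => a1 _.
rewrite mulr_sumr; apply: eq_bigr => s0 _; rewrite mulr_sumr.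
by [].
Qed.

Lemma Up_succ n s a :
  Up n.+1 s a = r s a + gamma * \sum_(s1 : S) \sum_(a1 : A) P s a s1 * pi s1 a1 * Up n s1 a1.
Proof.
rewrite /Up big_nat_recl // expr0 mul1r Ex0; congr (_ + _).
transitivity (\sum_(0 <= t < n) \sum_(s1 : S) \sum_(a1 : A)
   gamma * (P s a s1 * pi s1 a1 * (gamma ^+ t * Ex t s1 a1))).
  apply: eq_bigr => t _; rewrite Ex_first exprS mulr_sumr; apply: eq_bigr => s1 _.
  rewrite mulr_sumr; apply: eq_bigr => a1 _; ring.
rewrite exchange_big /= mulr_sumr; apply: eq_bigr => s1 _.
rewrite exchange_big /= mulr_sumr; apply: eq_bigr => a1 _.
by rewrite /Up !mulr_sumr.
Qed.


Lemma wsum s a : \sum_(s1 : S) \sum_(a1 : A) P s a s1 * pi s1 a1 = 1.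
Proof.
rewrite -[RHS](Psum s a); apply: eq_bigr => s1 _.
by rewrite -mulr_sumr pisum mulr1.
Qed.

Lemma Up_bnd n s a : 0 <= Up n s a <= (1 - gamma)^-1.
Proof.
have [g0 g1] := andP gb.
have hB : (1 - gamma)^-1 * (1 - gamma) = 1 by rewrite mulVf // subr_eq0 gt_eqF.
have B0 : 0 <= (1 - gamma)^-1 by rewrite invr_ge0 subr_ge0 ltW.
set B := (1 - gamma)^-1 in hB B0 *.
elim: n s a => [|n IH] s a; first by rewrite /Up big_geq // lexx B0.
rewrite Up_succ.
set W := \sum_(s1 : S) _.
have W0 : 0 <= W.
  apply: sumr_ge0 => s1 _; apply: sumr_ge0 => a1 _.
  by rewrite !mulr_ge0 //; case/andP: (IH s1 a1).
have W1 : W <= B.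
  rewrite -[B]mul1r -(wsum s a) mulr_suml.
  apply: ler_sum => s1 _; rewrite mulr_suml; apply: ler_sum => a1 _.
  by rewrite ler_wpM2l ?mulr_ge0 //; case/andP: (IH s1 a1).
have [r0 r1] := andP (rb s a).
apply/andP; split; first by rewrite addr_ge0 // mulr_ge0.
nra.
Qed.

Lemma Up_cvg s a : cvgn (fun n => Up n s a).
Proof.
apply: nondecreasing_is_cvgn.
  apply/nondecreasing_seqP => n.
  rewrite /Up big_nat_recr //= lerDl mulr_ge0 ?exprn_ge0 ?Ex_ge0 //.
  by case/andP: gb.
exists (1 - gamma)^-1 => _ [n _ <-].
by case/andP: (Up_bnd n s a).
Qed.

Lemma Qfun_eq s a : Qfun P r gamma pi s a = limn (fun n => Up n s a).
Proof. by []. Qed.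

Lemma bellman s a : Qfun P r gamma pi s a =
  r s a + gamma * \sum_(s1 : S) \sum_(a1 : A) P s a s1 * pi s1 a1 * Qfun P r gamma pi s1 a1.
Proof.
rewrite Qfun_eq; apply: cvg_lim => //.
rewrite -cvg_shiftS /=.
have -> : (fun n => Up n.+1 s a) = (fun n =>
   r s a + gamma * \sum_(s1 : S) \sum_(a1 : A) P s a s1 * pi s1 a1 * Up n s1 a1).
  by apply/funext => n; rewrite Up_succ.
apply: cvgD; first exact: cvg_cst.
apply: cvgMr.
apply: cvg_sumF => s1; apply: cvg_sumF => a1.
apply: cvgMr.
exact: Up_cvg.
Qed.

End MDPpart.

Lemma compare_pol (R : realType) (S A : finType) (P : S -> A -> S -> R) (r : S -> A -> R)
  (gamma tau : R) (pi1 pi2 : S -> A -> R) (Q1 Q2 : S -> A -> R) :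
  (forall s a s', 0 <= P s a s') -> (forall s a, \sum_(s' : S) P s a s' = 1) ->
  (forall s a, 0 <= pi2 s a) -> (forall s, \sum_(a : A) pi2 s a = 1) ->
  0 <= gamma < 1 ->
  (forall s a, Q1 s a = r s a + gamma * \sum_(s1 : S) \sum_(a1 : A) P s a s1 * pi1 s1 a1 * Q1 s1 a1) ->
  (forall s a, Q2 s a = r s a + gamma * \sum_(s1 : S) \sum_(a1 : A) P s a s1 * pi2 s1 a1 * Q2 s1 a1) ->
  (forall s1, - (2 * tau) <= \sum_(a1 : A) (pi2 s1 a1 - pi1 s1 a1) * Q1 s1 a1) ->
  forall s a, Q1 s a - 2 * tau * gamma / (1 - gamma) <= Q2 s a.
Proof.
move=> Pnn Psum p2nn p2sum /andP[g0 g1] B1 B2 Hadv s a.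
pose d (i : S * A) := Q2 i.1 i.2 - Q1 i.1 i.2.
case: (@arg_minP _ R (S * A)%type (s, a) xpredT d isT) => [[s0 a0] _ Hmin].
set m := d (s0, a0) in Hmin.
have conv (pp : S -> A -> R) (Q : S -> A -> R) s2 a2 :
  \sum_(s1 : S) \sum_(a1 : A) P s2 a2 s1 * pp s1 a1 * Q s1 a1 =
  \sum_(s1 : S) P s2 a2 s1 * \sum_(a1 : A) pp s1 a1 * Q s1 a1.
  by apply: eq_bigr => s1 _; rewrite mulr_sumr; apply: eq_bigr => a1 _; rewrite mulrA.
have key s1 : m - 2 * tau <=
    \sum_(a1 : A) pi2 s1 a1 * Q2 s1 a1 - \sum_(a1 : A) pi1 s1 a1 * Q1 s1 a1.
  have -> : \sum_(a1 : A) pi2 s1 a1 * Q2 s1 a1 - \sum_(a1 : A) pi1 s1 a1 * Q1 s1 a1 =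
     \sum_(a1 : A) pi2 s1 a1 * d (s1, a1) + \sum_(a1 : A) (pi2 s1 a1 - pi1 s1 a1) * Q1 s1 a1.
    rewrite -big_split -sumrB; apply: eq_bigr => a1 _; rewrite /d /=; ring.
  have : m <= \sum_(a1 : A) pi2 s1 a1 * d (s1, a1).
    rewrite -[m]mul1r -(p2sum s1) mulr_suml; apply: ler_sum => a1 _.
    by rewrite ler_wpM2l // Hmin.
  have := Hadv s1; lra.
have step s2 a2 : gamma * (m - 2 * tau) <= d (s2, a2).
  rewrite /d /= B1 B2 !conv.
  have -> : r s2 a2 + gamma * \sum_(s1 : S) P s2 a2 s1 * \sum_(a1 : A) pi2 s1 a1 * Q2 s1 a1 -
     (r s2 a2 + gamma * \sum_(s1 : S) P s2 a2 s1 * \sum_(a1 : A) pi1 s1 a1 * Q1 s1 a1) =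
     gamma * \sum_(s1 : S) P s2 a2 s1 * (\sum_(a1 : A) pi2 s1 a1 * Q2 s1 a1 - \sum_(a1 : A) pi1 s1 a1 * Q1 s1 a1).
    rewrite [X in _ = gamma * X](_ : _ = \sum_(s1 : S) P s2 a2 s1 * \sum_(a1 : A) pi2 s1 a1 * Q2 s1 a1 -
       \sum_(s1 : S) P s2 a2 s1 * \sum_(a1 : A) pi1 s1 a1 * Q1 s1 a1); first ring.
    by rewrite -sumrB; apply: eq_bigr => s1 _; rewrite mulrBr.
  apply: ler_wpM2l => //.
  set k := m - 2 * tau.
  rewrite -[X in X <= _]mul1r -(Psum s2 a2) mulr_suml; apply: ler_sum => s1 _.
  by apply: ler_wpM2l; [exact: Pnn | exact: key].
have hm : - (2 * tau * gamma / (1 - gamma)) <= m.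
  have g1' : 0 < 1 - gamma by rewrite subr_gt0.
  have := step s0 a0; rewrite -/m => h.
  rewrite -mulNr ler_pdivrMr //; nra.
have := Hmin (s, a) isT; rewrite /d /= => h; lra.
Qed.

Set Implicit Arguments. Unset Strict Implicit.
Section VecLemmas.
Variables (R : realType) (I : finType).
Implicit Types (x y a b : I -> R).

Lemma vn_ge0 x : 0 <= vnorm x.
Proof. exact: (@bigmax_ge_id _ R I). Qed.

Lemma vn_coord x i : `|x i| <= vnorm x.
Proof. exact: (@le_bigmax _ R I 0 (fun i => `|x i|) i). Qed.

Lemma vn_le x (M : R) : 0 <= M -> (forall i, `|x i| <= M) -> vnorm x <= M.
Proof. by move=> M0 H; apply: bigmax_le. Qed.

Lemma vn_scale x (s : R) : vnorm (fun i => s * x i) <= `|s| * vnorm x.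
Proof.
apply: vn_le; first by rewrite mulr_ge0 ?vn_ge0.
by move=> i; rewrite normrM ler_wpM2l ?vn_coord.
Qed.

Lemma vn_sq x : vnorm x * vnorm x <= dotp x x.
Proof.
case: (pickP (fun _ : I => true)) => [j _|H]; last first.
  rewrite /vnorm big_pred0 // mul0r /dotp big_pred0 //.
rewrite /vnorm; have [i0 _ ->] := @eq_bigmax _ R I 0 j xpredT (fun i => `|x i|) isT (fun i _ => normr_ge0 (x i)).
rewrite /dotp (bigD1 i0) //= ler_wpDr //.
  by apply: sumr_ge0 => i _; rewrite -expr2 sqr_ge0.
by rewrite -expr2 real_normK ?num_real.
Qed.

Lemma dotp_bnd a b : `|dotp a b| <= (\sum_i `|a i|) * vnorm b.
Proof.
rewrite /dotp mulr_suml; apply: le_trans (ler_norm_sum _ _ _) _.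
by apply: ler_sum => i _; rewrite normrM ler_wpM2l ?vn_coord.
Qed.

Lemma sumabs_ge0 a : 0 <= \sum_i `|a i|.
Proof. by apply: sumr_ge0 => i _. Qed.

Lemma dotpZ a b (s : R) : dotp a (fun i => s * b i) = s * dotp a b.
Proof. by rewrite /dotp mulr_sumr; apply: eq_bigr => i _; rewrite mulrCA. Qed.

Lemma dotpB a b c : dotp a (fun i => b i - c i) = dotp a b - dotp a c.
Proof. by rewrite /dotp -sumrB; apply: eq_bigr => i _; rewrite mulrBr. Qed.

Lemma dotpD a b c : dotp a (fun i => b i + c i) = dotp a b + dotp a c.
Proof. by rewrite /dotp -big_split; apply: eq_bigr => i _; rewrite mulrDr. Qed.

Lemma dotp_ext a b c : b =1 c -> dotp a b = dotp a c.
Proof. by move=> H; apply: eq_bigr => i _; rewrite H. Qed.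

Lemma vn_ext x y : x =1 y -> vnorm x = vnorm y.
Proof. by move=> H; apply: eq_bigr => i _; rewrite H. Qed.

Lemma affhull_mem (C : set (I -> R)) x : C x -> affhull C x.
Proof.
move=> Cx; exists 1%N, (fun _ => 1), (fun _ => x); split => //.
split; first by rewrite big_ord1.
by apply/funext => i; rewrite big_ord1 mul1r.
Qed.

Lemma affhull_comb (C : set (I -> R)) x y (al : R) :
  affhull C x -> affhull C y -> affhull C (fun i => al * x i + (1 - al) * y i).
Proof.
move=> [n1 [c1 [y1 [Cy1 [s1 ->]]]]] [n2 [c2 [y2 [Cy2 [s2 ->]]]]].
pose c (j : 'I_(n1 + n2)) := match @fintype.split n1 n2 j with inl j1 => al * c1 j1 | inr j2 => (1 - al) * c2 j2 end.
pose yy (j : 'I_(n1 + n2)) := match @fintype.split n1 n2 j with inl j1 => y1 j1 | inr j2 => y2 j2 end.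
exists (n1 + n2)%N, c, yy; split.
  by move=> j; rewrite /yy; case: (@fintype.split n1 n2 j).
have Hl j : fintype.split (lshift n2 j) = inl j := unsplitK (inl j).
have Hr j : fintype.split (rshift n1 j) = inr j := unsplitK (inr j).
split.
  rewrite big_split_ord /= /c.
  rewrite (eq_bigr (fun j => al * c1 j)) => [|j _]; last by rewrite Hl.
  rewrite (eq_bigr (fun j => (1 - al) * c2 j)) => [|j _]; last by rewrite Hr.
  by rewrite -!mulr_sumr s1 s2 !mulr1 addrC subrK.
apply/funext => i; symmetry; rewrite big_split_ord /= /c /yy.
rewrite (eq_bigr (fun j => al * c1 j * y1 j i)) => [|j _]; last by rewrite Hl.
rewrite (eq_bigr (fun j => (1 - al) * c2 j * y2 j i)) => [|j _]; last by rewrite Hr.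
by rewrite !mulr_sumr; congr (_ + _); apply: eq_bigr => j _; rewrite mulrA.
Qed.


Lemma affhull_add (C : set (I -> R)) y a b :
  affhull C y -> affhull C a -> affhull C b -> affhull C (fun i => y i + (b i - a i)).
Proof.
move=> Hy Ha Hb.
have H := affhull_comb 2 (affhull_comb (2^-1) Hy Hb) Ha.
suff -> : (fun i => y i + (b i - a i)) =
  (fun i => 2 * (2^-1 * y i + (1 - 2^-1) * b i) + (1 - 2) * a i) by [].
apply/funext => i; by field.
Qed.

Lemma affdir_scale (C : set (I -> R)) v (s : R) :
  affdir C v -> affdir C (fun i => s * v i).
Proof.
move=> [a [b [Ha [Hb ->]]]].
exists a, (fun i => s * b i + (1 - s) * a i); split => //; split.
  exact: affhull_comb.
by apply/funext => i; ring.
Qed.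

Lemma affhull_dir (C : set (I -> R)) y v :
  affhull C y -> affdir C v -> affhull C (fun i => y i + v i).
Proof. by move=> Hy [a [b [Ha [Hb ->]]]]; exact: affhull_add. Qed.

Lemma affdir_mem (C : set (I -> R)) x y :
  affhull C x -> affhull C y -> affdir C (fun i => y i - x i).
Proof. by move=> Hx Hy; exists x, y. Qed.

Lemma subgrad (h : (I -> R) -> \bar R) g z w :
  legendre h g -> rint (edom h) z -> edom h w ->
  fine (h z) + dotp (g z) (fun i => w i - z i) <= fine (h w).
Proof.
move=> [[_ [_ conv]] [_ [_ [grad _]]]] Hz Hw.
have [_ Hd] := grad z Hz.
have Cz := Hz.1.
set v := fun i => w i - z i.
have vdir : affdir (edom h) v by apply: affdir_mem; apply: affhull_mem.
set N := vnorm v.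
have N0 : 0 <= N := vn_ge0 v.
apply/ler_addgt0Pr => eps eps0.
set e := eps / (N + 1).
have N1 : 0 < N + 1 by lra.
have e0 : 0 < e by rewrite divr_gt0.
have [d [d0 Hd']] := Hd e e0.
set s := d / (N + d + 1).
have Dp : 0 < N + d + 1 by lra.
have s0 : 0 < s by rewrite divr_gt0.
have s1 : s <= 1 by rewrite ler_pdivrMr // mul1r; lra.
have sN : s * N < d by rewrite /s mulrAC ltr_pdivrMr //; nra.
set u := fun i => s * v i.
have udir : affdir (edom h) u by apply: affdir_scale.
have Nu : vnorm u <= s * N by rewrite (le_trans (vn_scale _ _)) // ger0_norm // ltW.
have := Hd' u udir (le_lt_trans Nu sN).
have -> : (fun i => z i + u i) = (fun i => s * w i + (1 - s) * z i).
  by apply/funext => i; rewrite /u /v; ring.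
rewrite /u dotpZ -/v.
have [_ Hconv] := conv w z s Hw Cz (introT andP (conj (ltW s0) s1)).
move: Hconv; rewrite -/v.
set H1 := fine (h _) => Hconv.
set G := dotp (g z) v.
rewrite ler_norml => /andP[HA _].
have eN : e * N <= eps.
  rewrite /e mulrAC ler_pdivrMr //; nra.
have eNu : e * vnorm u <= e * (s * N) by rewrite ler_wpM2l // ltW.
rewrite -/u in HA.
have seN : s * (e * N) <= s * eps by rewrite ler_wpM2l // ltW.
rewrite -(ler_pM2l s0); clearbody s e H1 G u; lra.
Qed.


Lemma two_pos (a b : R) : 0 < a -> 0 < b -> exists d : R, 0 < d /\ d < a /\ d < b.
Proof.
move=> a0 b0; exists (Num.min a b / 2).
have m0 : 0 < Num.min a b by rewrite lt_min a0 b0.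
have m1 : Num.min a b <= a by rewrite ge_min lexx.
have m2 : Num.min a b <= b by rewrite ge_min lexx orbT.
split; first by rewrite divr_gt0.
split; lra.
Qed.

Lemma simplex_comb x y (t : R) : 0 <= t <= 1 -> simplex x -> simplex y ->
  simplex (fun i => t * y i + (1 - t) * x i).
Proof.
move=> /andP[t0 t1] [x0 x1] [y0 y1]; split.
  by move=> i; rewrite addr_ge0 // mulr_ge0 // subr_ge0.
by rewrite big_split /= -!mulr_sumr x1 y1 !mulr1 addrC subrK.
Qed.

Lemma argmin_rint (h : (I -> R) -> \bar R) g (c x y : I -> R) :
  legendre h g -> @simplex R I `<=` edom h -> simplex y -> rint (edom h) y -> simplex x ->
  (forall p, simplex p -> fine (h x) - dotp c x <= fine (h p) - dotp c p) ->
  rint (edom h) x.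
Proof.
move=> Hl Hsub Sy Ry Sx Hmin.
have [//|nRx] := pselect (rint (edom h) x).
exfalso.
have Hl' := Hl; case: Hl' => [[_ [_ conv]] [_ [_ [grad blow]]]].
set C := edom h in Hsub Ry nRx conv grad blow *.
have Cx : C x := Hsub _ Sx.
have Cy : C y := Ry.1.
have [er [er0 Hr]] := Ry.2.
have [_ Hdy] := grad y Ry.
have [dy [dy0 Hdy']] := Hdy 1 ltr01.
have [del [del0 [del1 del2]]] := two_pos er0 dy0.
pose z t := fun i => t * y i + (1 - t) * x i.
have Sz t : 0 <= t <= 1 -> simplex (z t) by move=> ht; exact: simplex_comb.
have Rz t : 0 < t <= 1 -> rint C (z t).
  move=> /andP[t0 t1]; split; first by apply: Hsub; apply: Sz; rewrite ltW.
  exists (t * er); split; first by rewrite mulr_gt0.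
  move=> w Hw Hwn.
  pose y2 := fun i => t^-1 * w i + (1 - t^-1) * x i.
  have Ay2 : affhull C y2 by apply: affhull_comb => //; exact: affhull_mem.
  have Hy2 : vnorm (fun i => y2 i - y i) < er.
    rewrite (vn_ext (y := fun i => t^-1 * (w i - z t i))); last first.
      move=> i; rewrite /y2 /z; field; exact: lt0r_neq0.
    apply: le_lt_trans (vn_scale _ _) _.
    rewrite ger0_norm ?invr_ge0 ?ltW // -(ltr_pM2l t0) mulrA mulfV ?lt0r_neq0 // mul1r.
    done.
  have Cy2 := Hr y2 Ay2 Hy2.
  have -> : w = (fun i => t * y2 i + (1 - t) * x i).
    apply/funext => i; rewrite /y2; field; exact: lt0r_neq0.
  by case: (conv y2 x t Cy2 Cx (introT andP (conj (ltW t0) t1))).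
set S1 := \sum_i `|g y i|.
have S10 : 0 <= S1 := sumabs_ge0 _.
set V := vnorm (fun i => x i - y i).
have V0 : 0 <= V := vn_ge0 _.
set cyx := dotp c (fun i => y i - x i).
set K := S1 * del + del + S1 * V + `|cyx|.
have K0 : 0 <= K.
  by rewrite /K !addr_ge0 // ?mulr_ge0 // ltW.
have bnd t : 0 < t <= 1 -> del * vnorm (g (z t)) <= K.
  move=> ht; have /andP[t0 t1] := ht.
  have Rzt := Rz t ht; have Czt := Rzt.1.
  have St : 0 <= t <= 1 by rewrite ltW.
  set G := g (z t).
  set Gyx := dotp G (fun i => y i - x i).
  have ha : cyx <= Gyx.
    have sg1 := subgrad Hl Rzt Cx.
    have hm := Hmin (z t) (Sz t St).
    have e1 : dotp G (fun i => x i - z t i) = - t * Gyx.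
      by rewrite -dotpZ; apply: dotp_ext => i; rewrite /z; ring.
    have e2 : dotp c x - dotp c (z t) = - t * cyx.
      by rewrite -dotpB -dotpZ; apply: dotp_ext => i; rewrite /z; ring.
    rewrite -/G e1 in sg1.
    have : t * cyx <= t * Gyx by lra.
    by rewrite ler_pM2l.
  have hb : fine (h y) - S1 * V <= fine (h (z t)).
    have sg2 := subgrad Hl Ry Czt.
    have n1 : vnorm (fun i => z t i - y i) <= V.
      rewrite (vn_ext (y := fun i => (1 - t) * (x i - y i))); last first.
        by move=> i; rewrite /z; ring.
      apply: le_trans (vn_scale _ _) _.
      rewrite ger0_norm ?subr_ge0 //.
      by rewrite -[X in _ <= X]mul1r ler_wpM2r // lerBlDr lerDl ltW.
    have := dotp_bnd (g y) (fun i => z t i - y i).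
    rewrite ler_norml => /andP[hd _].
    have : S1 * vnorm (fun i => z t i - y i) <= S1 * V by rewrite ler_wpM2l.
    rewrite -/S1 in hd => ?; lra.
  have [NG0|NGn] := eqVneq (vnorm G) 0.
    by rewrite NG0 mulr0.
  have NGp : 0 < vnorm G by rewrite lt0r NGn vn_ge0.
  set v := fun i => (del / vnorm G) * G i.
  have vdir : affdir C v by apply: affdir_scale; exact: (grad _ Rzt).1.
  have hv : vnorm v <= del.
    apply: le_trans (vn_scale _ _) _.
    by rewrite ger0_norm ?divr_ge0 ?vn_ge0 ?(ltW del0) // divfK ?lt0r_neq0.
  set w := fun i => y i + v i.
  have Aw : affhull C w by apply: affhull_dir => //; exact: affhull_mem.
  have Cw : C w.
    apply: Hr => //; rewrite (vn_ext (y := v)) ?(le_lt_trans hv) // => i.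
    by rewrite /w; ring.
  have hw := Hdy' v vdir (le_lt_trans hv del2).
  move: hw; rewrite mul1r ler_norml => /andP[_ hw1].
  have hgv : dotp (g y) v <= S1 * del.
    apply: le_trans (ler_norm _) _; apply: le_trans (dotp_bnd _ _) _.
    by rewrite ler_wpM2l.
  have sg3 := subgrad Hl Rzt Cw.
  have e3 : dotp G (fun i => w i - z t i) = dotp G v + (1 - t) * Gyx.
    rewrite -dotpZ -dotpD; apply: dotp_ext => i; rewrite /w /z; ring.
  rewrite -/G e3 in sg3.
  have hGv : del * vnorm G <= dotp G v.
    rewrite /v dotpZ.
    have := vn_sq G.
    rewrite -(ler_pM2l (divr_gt0 del0 NGp)).
    apply: le_trans.
    by rewrite mulrA divfK ?lt0r_neq0.
  have h1t : - `|cyx| <= (1 - t) * Gyx.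
    have : (1 - t) * cyx <= (1 - t) * Gyx by rewrite ler_wpM2l // subr_ge0.
    apply: le_trans.
    have : `|(1 - t) * cyx| <= `|cyx|.
      by rewrite normrM ger0_norm ?subr_ge0 // -[X in _ <= X]mul1r ler_wpM2r // lerBlDr lerDl ltW.
    rewrite ler_norml => /andP[+ _]; done.
  have hvd : vnorm v <= del := hv.
  rewrite /K; lra.
pose u (k : nat) := z (k.+1%:R^-1).
have tk (k : nat) : 0 < (k.+1%:R^-1 : R) <= 1.
  by rewrite invr_gt0 ltr0Sn /= invf_le1 ?ltr0Sn // ler1n.
have Ru k : rint C (u k) := Rz _ (tk k).
have v0 (a : I -> R) : vnorm (fun i => a i - a i) = 0.
  apply/eqP; rewrite eq_le vn_ge0 andbT; apply: vn_le => // i.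
  by rewrite subrr normr0.
have clx : vclosure C x.
  by move=> e e0; exists x; split => //; rewrite v0.
have cv : forall e : R, 0 < e -> exists N, forall k, (N <= k)%N ->
    vnorm (fun i => u k i - x i) < e.
  move=> e e0; set W := vnorm (fun i => y i - x i).
  exists (Num.truncn (W / e)) => k Hk.
  rewrite (vn_ext (y := fun i => k.+1%:R^-1 * (y i - x i))); last first.
    by move=> i; rewrite /u /z; ring.
  apply: le_lt_trans (vn_scale _ _) _.
  rewrite ger0_norm ?invr_ge0 ?ler0n // mulrC ltr_pdivrMr ?ltr0Sn //.
  have := truncnS_gt (W / e); rewrite ltr_pdivrMr // => hW.
  have : (Num.truncn (W / e)).+1%:R <= k.+1%:R :> R by rewrite ler_nat.
  rewrite -/W => ?; clearbody W; nra.
have [N HN] := blow u x Ru clx nRx cv (K / del).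
have h1 := HN N (leqnn N).
have h2 := bnd _ (tk N).
rewrite ltr_pdivrMr // in h1.
rewrite /u in h1; lra.
Qed.

End VecLemmas.

Lemma dotpDl (I : finType) (R : realType) (a b p : I -> R) (k : R) :
  dotp (fun i => k * a i + b i) p = k * dotp a p + dotp b p.
Proof.
rewrite /dotp mulr_sumr -big_split; apply: eq_bigr => i _ /=; ring.
Qed.

Theorem lemma5 (R : realType) (S A : finType)
  (P : S -> A -> S -> R) (r : S -> A -> R) (gamma : R)
  (h : (A -> R) -> \bar R) (g : (A -> R) -> A -> R)
  (pi : nat -> S -> A -> R) (eta : nat -> R) (Qhat : nat -> S -> A -> R)
  (k : nat) (tau : R) :
  is_mdp P r gamma ->
  legendre h g ->
  @simplex R A `<=` edom h ->
  rint (@Pi_set R S A) (uncurry_pol (pi 0%N)) ->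
  (forall s, rint (edom h) (pi 0%N s)) ->
  (forall n, 0 < eta n) ->
  (forall n s, @simplex R A (pi n.+1 s) /\
     forall p, @simplex R A p ->
       - eta n * dotp (Qhat n s) (pi n.+1 s) + bregman h g (pi n.+1 s) (pi n s)
       <= - eta n * dotp (Qhat n s) p + bregman h g p (pi n s)) ->
  0 < tau ->
  (forall s a, `|Qhat k s a - Qfun P r gamma (pi k) s a| <= tau) ->
  forall s a,
    Qfun P r gamma (pi k) s a - 2 * tau * gamma / (1 - gamma)
      <= Qfun P r gamma (pi k.+1) s a.
Proof.
move=> [Pd [rbd gb]] Hl Hsub [Hpi0 _] R0 eta0 Hit tau0 Hq s a.
have Spi n s1 : simplex (pi n s1).
  by case: n => [|n]; [exact: Hpi0 | exact: (Hit n s1).1].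
have Rpi n s1 : rint (edom h) (pi n s1).
  case: n => [|n]; first exact: R0.
  apply: (@argmin_rint R A h g (fun i => eta n * Qhat n s1 i + g (pi n s1) i) _ (pi 0%N s1)) => //.
  move=> p Sp; have := (Hit n s1).2 p Sp.
  rewrite /bregman !dotpB !dotpDl; lra.
have mono s1 : dotp (Qhat k s1) (pi k s1) <= dotp (Qhat k s1) (pi k.+1 s1).
  have := (Hit k s1).2 (pi k s1) (Spi k s1).
  have D0 : bregman h g (pi k s1) (pi k s1) = 0.
    by rewrite /bregman dotpB; lra.
  have D1 : 0 <= bregman h g (pi k.+1 s1) (pi k s1).
    have := subgrad Hl (Rpi k s1) (Hsub _ (Spi k.+1 s1)).
    rewrite /bregman; lra.
  rewrite D0 addr0 => H.
  have e0 := eta0 k.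
  have : eta k * dotp (Qhat k s1) (pi k s1) <= eta k * dotp (Qhat k s1) (pi k.+1 s1) by lra.
  by rewrite ler_pM2l.
have Pnn s0 a0 s' : 0 <= P s0 a0 s' by case: (Pd s0 a0).
have Psum s0 a0 : \sum_(s' : S) P s0 a0 s' = 1 by case: (Pd s0 a0).
apply: (@compare_pol R S A P r gamma tau (pi k) (pi k.+1)) => //.
- by move=> s0 a0; case: (Spi k.+1 s0) => + _; apply.
- by move=> s0; case: (Spi k.+1 s0).
- move=> s0 a0; apply: bellman => //.
  + by move=> s1 a1; case: (Spi k s1) => + _; apply.
  + by move=> s1; case: (Spi k s1).
- move=> s0 a0; apply: bellman => //.
  + by move=> s1 a1; case: (Spi k.+1 s1) => + _; apply.
  + by move=> s1; case: (Spi k.+1 s1).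
- move=> s1.
  have [p2n p2s] := Spi k.+1 s1.
  have [p1n p1s] := Spi k s1.
  have := mono s1; rewrite /dotp => hm.
  have split1 : \sum_(a1 : A) (pi k.+1 s1 a1 - pi k s1 a1) * Qfun P r gamma (pi k) s1 a1 =
    (\sum_(a1 : A) Qhat k s1 a1 * pi k.+1 s1 a1 - \sum_(a1 : A) Qhat k s1 a1 * pi k s1 a1)
    + \sum_(a1 : A) (pi k.+1 s1 a1 - pi k s1 a1) * (Qfun P r gamma (pi k) s1 a1 - Qhat k s1 a1).
    rewrite -sumrB -big_split; apply: eq_bigr => a1 _ /=; ring.
  rewrite split1.
  have lb : - (2 * tau) <= \sum_(a1 : A) (pi k.+1 s1 a1 - pi k s1 a1) *
      (Qfun P r gamma (pi k) s1 a1 - Qhat k s1 a1).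
    have -> : - (2 * tau) = \sum_(a1 : A) - ((pi k.+1 s1 a1 + pi k s1 a1) * tau).
      by rewrite sumrN -mulr_suml big_split /= p2s p1s.
    apply: ler_sum => a1 _.
    have := Hq s1 a1; rewrite ler_norml => /andP[q1 q2].
    have := p2n a1; have := p1n a1; nra.
  lra.
Qed.
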